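(* Let $G_1=(V,D_1)$ and $G_2=(V,D_2)$ be two different (i.e. $D_1\neq D_2$) simple directed graphs on the same node set $V$, neither of which is complete and both of which are transitive triangle-free. Then $G_1$ and $G_2$ have different Jacobian matroids.
   Context: A directed graph $G=(V,D)$ has a finite node set $V$ and edge set $D\subseteq V\times V$ of ordered pairs $(i,j)$, $i\neq j$. It is simple if $(i,j)$ and $(j,i)$ are never both in $D$. It is complete if every pair of distinct nodes is adjacent. $\mathrm{ch}(i)$ denotes the set of children of $i$. A transitive triangle (shielded collider) is a triple of nodes $i,j,k$ with $i\to k$, $j\to k$, and $i,j$ adjacent (either $i\to j$ or $j\to i$). A graph is transitive triangle-free if it has none. Equivalently, for all $j\in V$ and all $i\in\mathrm{ch}(j)$ we have $\mathrm{ch}(j)\cap\mathrm{ch}(i)=\emptyset$. For $G=(V,D)$ let $\Lambda$ be the $V\times V$ matrix with indeterminate entries $\lambda_{ij}$ for $(i,j)\in D$ and zeros elsewhere, and $s$ a further indeterminate. Let $\psi_G(\Lambda,s)=s(I-\Lambda)(I-\Lambda)^T=K$. The transposed Jacobian $J(\psi_G)$ has rows indexed by $\{\lambda_{kl}:(k,l)\in D\}\cup\{s\}$ and columns indexed by entries $K_{ij}$, $i\le j$. Its entry in row $\theta$, column $K_{ij}$ is $\partial K_{ij}/\partial\theta$. The Jacobian matroid of $G$ is the matroid on the columns in which a set is independent iff its columns are linearly independent over $\mathbb{R}(\lambda,s)$. *)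

(* Defs.v *)
From HB Require Import structures.
From mathcomp Require Import all_boot all_order all_algebra.
From mathcomp Require Import fraction mpoly.
From mathcomp Require Import reals.

Set Implicit Arguments.
Unset Strict Implicit.
Unset Printing Implicit Defensive.

Import Order.TTheory GRing.Theory Num.Theory.
Local Open Scope ring_scope.

Definition simple_digraph (n : nat) (D : {set 'I_n * 'I_n}) : Prop :=
  (forall i j, (i, j) \in D -> i != j) /\
  (forall i j, (i, j) \in D -> (j, i) \notin D).

Definition adjacent (n : nat) (D : {set 'I_n * 'I_n}) (i j : 'I_n) : bool :=
  ((i, j) \in D) || ((j, i) \in D).

Definition complete_digraph (n : nat) (D : {set 'I_n * 'I_n}) : Prop :=
  forall i j : 'I_n, i != j -> adjacent D i j.

Definition transitive_triangle_free (n : nat) (D : {set 'I_n * 'I_n}) : Prop :=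
  ~ (exists i j k : 'I_n,
        [/\ (i, k) \in D, (j, k) \in D & adjacent D i j]).

(* Polynomial ring in the indeterminates lambda_{ij} ((i,j) in V x V) and s.
   Variables are indexed by 'I_(N.+1) with N = #|V x V|; lambda_{ij} is the
   variable number enum_rank (i,j), and s is the last variable.  Only the
   lambda_{ij} with (i,j) in D are used by a given graph. *)
Definition nvars (n : nat) : nat := #|{: 'I_n * 'I_n}|.+1.

Definition lam_idx (n : nat) (i j : 'I_n) : 'I_(nvars n) :=
  widen_ord (leqnSn _) (enum_rank (i, j)).

Definition s_idx (n : nat) : 'I_(nvars n) := ord_max.

Section Jac.
Variable R : realType.
Variable n : nat.
Notation P := {mpoly R[nvars n]}.

Definition Lam (D : {set 'I_n * 'I_n}) : 'M[P]_n :=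
  \matrix_(i, j) (if (i, j) \in D then 'X_(lam_idx i j) else 0).

Definition Kmat (D : {set 'I_n * 'I_n}) : 'M[P]_n :=
  'X_(s_idx n) *: ((1%:M - Lam D) *m (1%:M - Lam D)^T).

(* rows of the transposed Jacobian: the parameters lambda_{kl}, (k,l) in D, and s *)
Definition param (D : {set 'I_n * 'I_n}) := option {e : 'I_n * 'I_n | e \in D}.

Definition param_var (D : {set 'I_n * 'I_n}) (t : param D) : 'I_(nvars n) :=
  match t with
  | Some e => lam_idx (val e).1 (val e).2
  | None => s_idx n
  end.

(* columns: entries K_{ij} with i <= j *)
Definition kcol := {p : 'I_n * 'I_n | (p.1 <= p.2)%N}.

Definition jac (D : {set 'I_n * 'I_n}) (t : param D) (c : kcol) : P :=
  mderiv (param_var t) (Kmat D (val c).1 (val c).2).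

Definition jac_indep (D : {set 'I_n * 'I_n}) (S : {set kcol}) : Prop :=
  forall a : kcol -> {fraction P},
    (forall t : param D, \sum_(c in S) a c * FracField.tofrac (jac t c) = 0) ->
    forall c, c \in S -> a c = 0.

End Jac.

Definition same_jacobian_matroid (R : realType) (n : nat)
  (D1 D2 : {set 'I_n * 'I_n}) : Prop :=
  forall S : {set kcol n}, jac_indep R D1 S <-> jac_indep R D2 S.

(* Main.v *)
Require Import Defs.
From mathcomp Require Import all_boot all_order all_algebra.
From mathcomp Require Import fraction mpoly.
From mathcomp Require Import reals.
From mathcomp Require Import ring.
From Stdlib Require Import Classical ClassicalEpsilon.
Set Implicit Arguments. Unset Strict Implicit. Unset Printing Implicit Defensive.
Import Order.TTheory GRing.Theory Num.Theory.
Local Open Scope ring_scope.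

Section LinAlg.
Variables (F : fieldType) (C : finType).

Definition indepf (I : Type) (f : C -> I -> F) (S : {set C}) : Prop :=
  forall a : C -> F, (forall t, \sum_(c in S) a c * f c t = 0) ->
    forall c, c \in S -> a c = 0.

Definition inspan (I : Type) (f : C -> I -> F) (T : {set C}) (v : I -> F) :=
  exists b : C -> F, forall t, v t = \sum_(c in T) b c * f c t.

Lemma indep0 I (f : C -> I -> F) : indepf f set0.
Proof. by move=> a _ c; rewrite inE. Qed.

Lemma maximal_indep I (f : C -> I -> F) (T : {set C}) :
  exists B : {set C}, [/\ B \subset T, indepf f B &
    forall c, c \in T -> c \notin B -> ~ indepf f (c |: B)].
Proof.
suff H : forall m (B : {set C}), (#|T :\: B| <= m)%N -> B \subset T -> indepf f B ->
  exists B' : {set C}, [/\ B' \subset T, indepf f B' &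
    forall c, c \in T -> c \notin B' -> ~ indepf f (c |: B')].
  apply: (H #|T| set0); [by rewrite setD0 | exact: sub0set | exact: indep0].
elim=> [|m IH] B hc hBT hB.
  exists B; split=> // c cT cB; exfalso.
  move: hc; rewrite leqn0 cards_eq0 => /eqP/setP/(_ c).
  by rewrite !inE cT cB.
case: (classic (forall c, c \in T -> c \notin B -> ~ indepf f (c |: B))) => [H|].
  by exists B; split.
move=> /not_all_ex_not [c].
move=> H1; have [cT H2] := imply_to_and _ _ H1.
have [cB H3] := imply_to_and _ _ H2.
have hc' := NNPP _ H3.
apply: (IH (c |: B)) => //.
- have : (#|T :\: (c |: B)| < #|T :\: B|)%N.
    apply: proper_card; rewrite setDUr properEneq subsetIr andbT.
    apply/negP => /eqP/setP/(_ c); rewrite !inE cT cB eqxx /=.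
    by move=> /esym.
  by move=> h; rewrite -ltnS; apply: leq_trans h hc.
- by rewrite subUset sub1set cT.
Qed.

Lemma span_of_dep I (f : C -> I -> F) (B : {set C}) c :
  indepf f B -> ~ indepf f (c |: B) -> c \notin B -> inspan f B (f c).
Proof.
move=> hB hcB cB.
have [a Ha] := not_all_ex_not _ _ hcB.
have [hsum Hb] := imply_to_and _ _ Ha.
have [d Hd] := not_all_ex_not _ _ Hb.
have [dcB ad] := imply_to_and _ _ Hd.
have split_sum t : \sum_(e in c |: B) a e * f e t = a c * f c t + \sum_(e in B) a e * f e t.
  by rewrite big_setU1.
have ac : a c != 0.
  apply/negP => /eqP ac0; apply: ad.
  have hB0 : forall t, \sum_(e in B) a e * f e t = 0.
    by move=> t; have := hsum t; rewrite split_sum ac0 mul0r add0r.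
  move: dcB; rewrite in_setU1 => /orP [/eqP -> //|dB].
  exact: hB hB0 d dB.
exists (fun e => - (a e / a c)) => t.
have := hsum t; rewrite split_sum => /eqP; rewrite addr_eq0 => /eqP h.
apply: (mulfI ac); rewrite h mulr_sumr -sumrN; apply: eq_bigr => e _.
by rewrite mulNr mulrN mulrA [a c * _]mulrC mulfVK.
Qed.

Lemma span_trans I (f : C -> I -> F) (T B : {set C}) v :
  inspan f T v -> (forall c, c \in T -> inspan f B (f c)) -> inspan f B v.
Proof.
move=> [b hb] hT.
have hT' : forall c, exists e : C -> F, c \in T -> forall t, f c t = \sum_(d in B) e d * f d t.
  move=> c; case: (boolP (c \in T)) => cT.
    by have [e he] := hT c cT; exists e.
  by exists (fun _ => 0).
pose e c := proj1_sig (constructive_indefinite_description _ (hT' c)).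
have he c : c \in T -> forall t, f c t = \sum_(d in B) e c d * f d t.
  exact: (proj2_sig (constructive_indefinite_description _ (hT' c))).
exists (fun d => \sum_(c in T) b c * e c d) => t.
rewrite hb.
transitivity (\sum_(c in T) \sum_(d in B) b c * (e c d * f d t)).
  by apply: eq_bigr => c cT; rewrite (he c cT t) mulr_sumr.
rewrite exchange_big; apply: eq_bigr => d _.
by rewrite mulr_suml; apply: eq_bigr => c _; rewrite mulrA.
Qed.

Lemma dep_of_span I (f : C -> I -> F) (B : {set C}) K :
  K \notin B -> inspan f B (f K) -> ~ indepf f (K |: B).
Proof.
move=> KB [b hb] hind.
pose a d := if d == K then -1 else b d.
have : a K = 0.
  apply: hind; last by rewrite setU11.
  move=> t; rewrite big_setU1 //= /a eqxx mulN1r hb.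
  rewrite addrC (eq_bigr (fun d => b d * f d t)); first by rewrite subrr.
  by move=> d dB; case: eqP => // dK; move: KB; rewrite -dK dB.
by rewrite /a eqxx => /eqP; rewrite oppr_eq0 oner_eq0.
Qed.

Lemma key_contra I1 I2 (f1 : C -> I1 -> F) (f2 : C -> I2 -> F)
  (T : {set C}) (K : C) :
  (forall S, indepf f1 S <-> indepf f2 S) ->
  K \notin T -> inspan f1 T (f1 K) ->
  (exists t0, f2 K t0 != 0 /\ forall c, c \in T -> f2 c t0 = 0) -> False.
Proof.
move=> hS KT hspan [t0 [hK0 hT0]].
have [B [BT hB hmax]] := maximal_indep f2 T.
have KB : K \notin B by apply: contra KT; apply: (subsetP BT).
have hKB : indepf f2 (K |: B).
  move=> a hsum.
  have aK : a K = 0.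
    have := hsum t0; rewrite big_setU1 //= big1 ?addr0.
      by move/eqP; rewrite mulf_eq0 (negbTE hK0) orbF => /eqP.
    by move=> c cB; rewrite hT0 ?mulr0 // (subsetP BT).
  have hB0 : forall t, \sum_(c in B) a c * f2 c t = 0.
    by move=> t; have := hsum t; rewrite big_setU1 //= aK mul0r add0r.
  move=> c; rewrite in_setU1 => /orP [/eqP -> //|cB].
  exact: hB a hB0 c cB.
have hKB1 : indepf f1 (K |: B) by apply/hS.
have hB1 : indepf f1 B by apply/hS.
have hspanB : inspan f1 B (f1 K).
  apply: (span_trans hspan) => c cT.
  case: (boolP (c \in B)) => cB.
    exists (fun d => (d == c)%:R) => t.
    rewrite (bigD1 c) //= eqxx mul1r big1 ?addr0 // => d /andP [_ /negbTE ->].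
    by rewrite mul0r.
  apply: span_of_dep => //.
  by move=> h; apply: (hmax c cT cB); apply/hS.
exact: dep_of_span KB hspanB hKB1.
Qed.

End LinAlg.

Section Conc.
Variable R : realType.
Variable n : nat.
Local Notation P := {mpoly R[nvars n]}.

Definition yv (i j : 'I_n) : P := 'X_(lam_idx i j).
Definition xs : P := 'X_(s_idx n).
Definition Lv (D : {set 'I_n * 'I_n}) i j : P := if (i, j) \in D then yv i j else 0.
Definition Mx (D : {set 'I_n * 'I_n}) (i l : 'I_n) : P := (i == l)%:R - Lv D i l.
Definition PP (D : {set 'I_n * 'I_n}) (i j : 'I_n) : P := \sum_l Mx D i l * Mx D j l.

Lemma KmatE (D : {set 'I_n * 'I_n}) i j : Kmat R D i j = xs * PP D i j.
Proof.
rewrite /Kmat !mxE /PP; congr (_ * _); apply: eq_bigr => l _.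
by rewrite !mxE /Mx /Lv.
Qed.

Lemma lam_idx_eq (i j i' j' : 'I_n) :
  (lam_idx i j == lam_idx i' j') = ((i, j) == (i', j')).
Proof.
rewrite /lam_idx.
apply/eqP/eqP => [h|[-> ->] //].
apply: enum_rank_inj; apply: val_inj.
by move: (congr1 val h) => /=.
Qed.

Lemma lam_neq_s (i j : 'I_n) : (lam_idx i j == s_idx n) = false.
Proof.
apply/negP => /eqP/(congr1 val) /=.
by move=> h; have := ltn_ord (enum_rank (i, j)); rewrite h ltnn.
Qed.

Lemma dX (v w : 'I_(nvars n)) : mderiv v ('X_w : P) = (w == v)%:R.
Proof.
rewrite mderivX mnm1E; case: (eqVneq w v) => [->|ne].
  have -> : (U_(v) - U_(v) = 0)%MM by apply/mnmP => j; rewrite mnmBE subnn mnm0E.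
  by rewrite mpolyX0 scale1r.
by rewrite scale0r.
Qed.

Lemma dnat (v : 'I_(nvars n)) (k : nat) : mderiv v (k%:R : P) = 0.
Proof. by rewrite -mpolyC_nat mderivC. Qed.

Lemma dMx_lam (D : {set 'I_n * 'I_n}) (a b i l : 'I_n) : (a, b) \in D ->
  mderiv (lam_idx a b) (Mx D i l) = - ((i == a) && (l == b))%:R.
Proof.
move=> hab; rewrite /Mx /Lv mderivB dnat sub0r; congr (- _).
case: ifP => hil.
  by rewrite /yv dX lam_idx_eq.
rewrite raddf0; case: (eqVneq i a) => [eia|] //=; case: (eqVneq l b) => [elb|] //=.
by rewrite eia elb hab in hil.
Qed.

Lemma dMx_s (D : {set 'I_n * 'I_n}) (i l : 'I_n) : mderiv (s_idx n) (Mx D i l) = 0.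
Proof.
rewrite /Mx /Lv mderivB dnat sub0r; case: ifP => _; last by rewrite raddf0 oppr0.
by rewrite /yv dX lam_neq_s oppr0.
Qed.

Lemma sum_delta (g : 'I_n -> P) (c : bool) (b : 'I_n) :
  \sum_l ((c && (l == b))%:R * g l) = c%:R * g b.
Proof.
rewrite (bigD1 b) //= eqxx andbT big1 ?addr0 // => l /negbTE ->.
by rewrite andbF mul0r.
Qed.

Lemma dPP_lam (D : {set 'I_n * 'I_n}) (a b i j : 'I_n) : (a, b) \in D ->
  mderiv (lam_idx a b) (PP D i j) =
  - ((i == a)%:R * Mx D j b) - (j == a)%:R * Mx D i b.
Proof.
move=> hab; rewrite /PP raddf_sum /=.
rewrite (eq_bigr (fun l => - (((i == a) && (l == b))%:R * Mx D j l)
                          - ((j == a) && (l == b))%:R * Mx D i l)).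
  by rewrite big_split /= !sumrN !sum_delta.
by move=> l _; rewrite mderivM !dMx_lam // mulNr mulrN [Mx D i l * _]mulrC.
Qed.

Lemma dPP_s (D : {set 'I_n * 'I_n}) (i j : 'I_n) : mderiv (s_idx n) (PP D i j) = 0.
Proof.
rewrite /PP raddf_sum /= big1 // => l _.
by rewrite mderivM !dMx_s mul0r mulr0 addr0.
Qed.

Definition Jf (D : {set 'I_n * 'I_n}) (t : param D) (i j : 'I_n) : P :=
  match t with
  | None => PP D i j
  | Some e => xs * (- ((i == (val e).1)%:R * Mx D j (val e).2)
                    - (j == (val e).1)%:R * Mx D i (val e).2)
  end.

Lemma jacE (D : {set 'I_n * 'I_n}) (t : param D) (c : kcol n) :
  jac R t c = Jf t (val c).1 (val c).2.
Proof.
rewrite /jac KmatE mderivM; case: t => [[[a b] hab]|] /=.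
  by rewrite /xs dX [s_idx n == _]eq_sym lam_neq_s mul0r add0r dPP_lam.
by rewrite /xs dX eqxx mul1r dPP_s mulr0 addr0.
Qed.

Lemma Jf_sym (D : {set 'I_n * 'I_n}) (t : param D) i j : Jf t i j = Jf t j i.
Proof.
case: t => [e|] /=; first by rewrite addrC.
by rewrite /PP; apply: eq_bigr => l _; rewrite mulrC.
Qed.

Lemma mkcol_proof (i j : 'I_n) : ~~ (i <= j)%N -> (j <= i)%N.
Proof. by rewrite -ltnNge => /ltnW. Qed.

Definition mkcol (i j : 'I_n) : kcol n :=
  match leqP i j with
  | LeqNotGtn h => exist _ (i, j) h
  | GtnNotLeq h => exist _ (j, i) (ltnW h)
  end.

Lemma jac_mk (D : {set 'I_n * 'I_n}) (t : param D) i j : jac R t (mkcol i j) = Jf t i j.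
Proof.
rewrite jacE /mkcol; case: leqP => h //=.
by rewrite Jf_sym.
Qed.

Definition Tx (x : 'I_n) : {set kcol n} :=
  [set c : kcol n | ((val c).1 != x) && ((val c).2 != x)].

Lemma mk_inT (x i j : 'I_n) : (mkcol i j \in Tx x) = (i != x) && (j != x).
Proof. by rewrite inE /mkcol; case: leqP => //= _; rewrite andbC. Qed.

Local Notation GS := {set 'I_n * 'I_n}.

Lemma sum_dl (g : 'I_n -> P) (i : 'I_n) : \sum_l (i == l)%:R * g l = g i.
Proof.
rewrite (bigD1 i) //= eqxx mul1r big1 ?addr0 // => l /negbTE.
by rewrite eq_sym => ->; rewrite mul0r.
Qed.

Lemma sum_dr (g : 'I_n -> P) (i : 'I_n) : \sum_l g l * (i == l)%:R = g i.
Proof. by rewrite -[RHS]sum_dl; apply: eq_bigr => l _; rewrite mulrC. Qed.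

Lemma PP_expand (D : GS) i j :
  PP D i j = (i == j)%:R - Lv D j i - Lv D i j + \sum_l Lv D i l * Lv D j l.
Proof.
rewrite /PP.
transitivity (\sum_l ((i == l)%:R * (j == l)%:R - (i == l)%:R * Lv D j l
               - Lv D i l * (j == l)%:R + Lv D i l * Lv D j l)).
  by apply: eq_bigr => l _; rewrite /Mx; ring.
rewrite big_split /= !sumrB sum_dl sum_dl sum_dr.
by rewrite eq_sym.
Qed.

Lemma sNE (D : GS) i j : simple_digraph D -> (i, j) \in D -> i != j.
Proof. by case=> h _; apply: h. Qed.

Lemma sNA (D : GS) i j : simple_digraph D -> (i, j) \in D -> (j, i) \notin D.
Proof. by case=> _ h; apply: h. Qed.

Lemma ttfE (D : GS) i j k : transitive_triangle_free D ->
  (i, k) \in D -> (j, k) \in D -> (i, j) \in D -> False.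
Proof. by move=> h hik hjk hij; apply: h; exists i, j, k; split => //; rewrite /adjacent hij. Qed.

Lemma Lv_in (D : GS) i j : (i, j) \in D -> Lv D i j = yv i j.
Proof. by rewrite /Lv => ->. Qed.

Lemma Lv_out (D : GS) i j : (i, j) \notin D -> Lv D i j = 0.
Proof. by rewrite /Lv => /negbTE ->. Qed.

Lemma Mx_self (D : GS) i : simple_digraph D -> Mx D i i = 1.
Proof.
move=> hs; rewrite /Mx eqxx Lv_out ?subr0 //.
by apply/negP => /(sNE hs); rewrite eqxx.
Qed.

Lemma Mx_off (D : GS) i l : i != l -> Mx D i l = - Lv D i l.
Proof. by rewrite /Mx => /negbTE ->; rewrite sub0r. Qed.

Definition Qs (D : GS) v : P := \sum_(w | (v, w) \in D) yv v w ^+ 2.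

Lemma PP_diag (D : GS) v : simple_digraph D -> PP D v v = 1 + Qs D v.
Proof.
move=> hs; rewrite PP_expand eqxx Lv_out ?subr0; last first.
  by apply/negP => /(sNE hs); rewrite eqxx.
congr (_ + _); rewrite /Qs [RHS]big_mkcond /=; apply: eq_bigr => l _.
by rewrite /Lv; case: ifP => _; rewrite ?expr2 ?mulr0.
Qed.

Lemma PP_edge (D : GS) v w : simple_digraph D -> transitive_triangle_free D ->
  (v, w) \in D -> PP D v w = - yv v w.
Proof.
move=> hs ht hvw; rewrite PP_expand (negbTE (sNE hs hvw)) (Lv_out (sNA hs hvw)).
rewrite (Lv_in hvw) big1 ?addr0 ?subr0 ?sub0r // => l _.
rewrite /Lv; case: ifP => h1; last by rewrite mul0r.
case: ifP => h2; last by rewrite mulr0.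
by exfalso; apply: (ttfE ht h1 h2 hvw).
Qed.

Definition es (D : GS) (t : param D) : P := if t is None then 1 else 0.

Lemma V1 (D : GS) v (t : param D) : simple_digraph D -> transitive_triangle_free D ->
  Jf t v v + \sum_(w | (v, w) \in D) (2%:R * yv v w) * Jf t v w = (1 - Qs D v) * es t.
Proof.
move=> hs ht; case: t => [[[a b] hab]|] /=.
  rewrite mulr0; case: (eqVneq v a) => [eva|nva].
    subst a.
    have hvb := sNE hs hab.
    rewrite (Mx_off _ hvb) (Lv_in hab) (bigD1 b) //= Mx_self // (eq_sym b v) (negbTE hvb).
    rewrite big1 ?addr0; first by rewrite mul0r subr0; ring.
    move=> w /andP [hw nwb]; rewrite (eq_sym w v) (negbTE (sNE hs hw)) /=.
    rewrite (Mx_off _ nwb) Lv_out ?oppr0 ?mul0r ?mulr0 ?subr0 ?oppr0 ?mulr0 //.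
    by apply/negP => hwb; apply: (ttfE ht hab hwb hw).
  rewrite /= big1; first by ring.
  move=> w hw; case: (eqVneq w a) => [ewa|nwa]; last by rewrite /=; ring.
  subst w; rewrite /=.
  have hvb : v != b.
    by apply/negP => /eqP evb; subst b; move: (sNA hs hw); rewrite hab.
  rewrite (Mx_off _ hvb) Lv_out; first by ring.
  by apply/negP => hvb'; apply: (ttfE ht hvb' hab hw).
rewrite mulr1 PP_diag //.
have -> : \sum_(w | (v, w) \in D) 2%:R * yv v w * PP D v w = - (2%:R * Qs D v).
  rewrite /Qs mulr_sumr -sumrN; apply: eq_bigr => w hw.
  by rewrite PP_edge //; ring.
ring.
Qed.

Lemma Lstar (D : GS) x v l : (forall p q, (p, q) \in D -> q = x) -> (v, x) \in D ->
  Lv D v l = (l == x)%:R * yv v x.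
Proof.
move=> hst hvx; rewrite /Lv; case: ifP => h.
  by rewrite (hst _ _ h) eqxx mul1r.
case: (eqVneq l x) => [elx|]; last by rewrite mul0r.
by rewrite elx hvx in h.
Qed.

Lemma sum_x2 (x : 'I_n) (a b : P) :
  \sum_l ((l == x)%:R * a) * ((l == x)%:R * b) = a * b.
Proof.
rewrite (bigD1 x) //= eqxx big1 => [|l /negbTE ->]; first by rewrite /=; ring.
by rewrite /=; ring.
Qed.

Lemma sum_L (D : GS) x v w : (forall p q, (p, q) \in D -> q = x) ->
  (v, x) \in D -> (w, x) \in D ->
  \sum_l Lv D v l * Lv D w l = yv v x * yv w x.
Proof.
move=> hst hv hw.
rewrite (eq_bigr (fun l => ((l == x)%:R * yv v x) * ((l == x)%:R * yv w x))) ?sum_x2 //.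
by move=> l _; rewrite (Lstar _ hst hv) (Lstar _ hst hw).
Qed.

Lemma V2 (D : GS) x k u (t : param D) : simple_digraph D ->
  (forall p q, (p, q) \in D -> q = x) -> (k, x) \in D -> (u, x) \in D -> u != k ->
  (yv k x ^+ 2 + yv u x ^+ 2) * es t =
  - (2%:R * yv k x * yv u x) * Jf t u k + yv u x ^+ 2 * Jf t k k
  + yv k x ^+ 2 * Jf t u u.
Proof.
move=> hs hst hkx hux nuk.
have nkx := sNE hs hkx; have nux := sNE hs hux.
case: t => [[[c d] hcd]|] /=.
  have edx := hst _ _ hcd; subst d => /=.
  rewrite (Mx_off _ nkx) (Mx_off _ nux) !Lv_in //.
  rewrite mulr0; ring.
rewrite !PP_expand (negbTE nuk) !eqxx.
rewrite (sum_L hst hkx hkx) (sum_L hst hux hux) (sum_L hst hux hkx).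
rewrite !(Lstar _ hst hkx) !(Lstar _ hst hux) (negbTE nux) (negbTE nkx).
rewrite /=; ring.
Qed.


End Conc.

Section SpanP.
Variables (Rg : comRingType) (C : finType) (I : Type) (f : C -> I -> Rg) (T : {set C}).

Definition spanP (v : I -> Rg) := exists b : C -> Rg, forall t, v t = \sum_(c in T) b c * f c t.

Lemma spanP_ext (v w : I -> Rg) : (forall t, v t = w t) -> spanP v -> spanP w.
Proof. by move=> h [b hb]; exists b => t; rewrite -h hb. Qed.

Lemma spanP_col c : c \in T -> spanP (f c).
Proof.
move=> cT; exists (fun d => (d == c)%:R) => t.
rewrite (bigD1 c) //= eqxx mul1r big1 ?addr0 // => d /andP [_ /negbTE ->].
by rewrite mul0r.
Qed.

Lemma spanP_add (v w : I -> Rg) : spanP v -> spanP w -> spanP (fun t => v t + w t).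
Proof.
move=> [b1 h1] [b2 h2]; exists (fun c => b1 c + b2 c) => t.
by rewrite h1 h2 -big_split; apply: eq_bigr => c _; rewrite mulrDl.
Qed.

Lemma spanP_scale (p : Rg) (v : I -> Rg) : spanP v -> spanP (fun t => p * v t).
Proof.
move=> [b h]; exists (fun c => p * b c) => t.
by rewrite h mulr_sumr; apply: eq_bigr => c _; rewrite mulrA.
Qed.

Lemma spanP_opp (v : I -> Rg) : spanP v -> spanP (fun t => - v t).
Proof.
move=> h; apply: spanP_ext (spanP_scale (-1) h) => t; by rewrite mulN1r.
Qed.

Lemma spanP_sum (J : finType) (Pr : pred J) (g : J -> I -> Rg) :
  (forall j, Pr j -> spanP (g j)) -> spanP (fun t => \sum_(j | Pr j) g j t).
Proof.
move=> hg.
have hg' : forall j, exists b : C -> Rg, Pr j -> forall t, g j t = \sum_(c in T) b c * f c t.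
  move=> j; case: (boolP (Pr j)) => pj.
    by have [b hb] := hg j pj; exists b.
  by exists (fun _ => 0).
pose b j := proj1_sig (constructive_indefinite_description _ (hg' j)).
have hb j : Pr j -> forall t, g j t = \sum_(c in T) b j c * f c t.
  exact: (proj2_sig (constructive_indefinite_description _ (hg' j))).
exists (fun c => \sum_(j | Pr j) b j c) => t.
rewrite (eq_bigr (fun j => \sum_(c in T) b j c * f c t)); last by move=> j pj; rewrite (hb j pj).
rewrite exchange_big; apply: eq_bigr => c _.
by rewrite mulr_suml.
Qed.

End SpanP.

Section Conc2.
Variable R : realType.
Variable n : nat.
Local Notation P := {mpoly R[nvars n]}.
Local Notation GS := {set 'I_n * 'I_n}.
Local Notation jf D := (fun (c : kcol n) (t : param D) => jac R t c).

Lemma nz_of_eval (p : P) (v : 'I_(nvars n) -> R) : p.@[v] != 0 -> p != 0.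
Proof. by apply: contraNneq => ->; rewrite meval0. Qed.

Lemma yv_nz (i j : 'I_n) : yv R i j != 0.
Proof. by apply: (@nz_of_eval _ (fun _ => 1)); rewrite /yv mevalXU oner_neq0. Qed.

Lemma xs_nz : xs R n != 0.
Proof. by apply: (@nz_of_eval _ (fun _ => 1)); rewrite /xs mevalXU oner_neq0. Qed.

Lemma two_nz : (2%:R : P) != 0.
Proof.
apply: (@nz_of_eval _ (fun _ => 1)); rewrite mevalMn meval1.
by rewrite pnatr_eq0.
Qed.

Lemma Qs_nz (D : GS) v : 1 - Qs R D v != 0.
Proof.
apply: (@nz_of_eval _ (fun _ => 0)); rewrite mevalB meval1 /Qs.
rewrite (big_morph _ (mevalD _) (meval0 _)) big1 ?subr0 ?oner_neq0 //.
by move=> w _; rewrite expr2 mevalM /yv mevalXU mul0r.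
Qed.

Lemma sq_nz (k u x : 'I_n) : u != k -> yv R k x ^+ 2 + yv R u x ^+ 2 != 0.
Proof.
move=> nuk.
apply: (@nz_of_eval _ (fun i => if i == lam_idx k x then 1 else 0)).
rewrite mevalD !expr2 !mevalM /yv !mevalXU eqxx lam_idx_eq.
have -> : ((u, x) == (k, x)) = false by rewrite xpair_eqE (negbTE nuk).
by rewrite mul0r addr0 mulr1 oner_neq0.
Qed.

Lemma es_avail (D : GS) x k u : simple_digraph D -> transitive_triangle_free D ->
  (k, x) \in D -> u != k -> u != x ->
  exists c0 : P, c0 != 0 /\ spanP (jf D) (Tx x) (fun t => c0 * es R t).
Proof.
move=> hs ht hkx nuk nux.
have nkx := sNE hs hkx.
case: (classic (exists m, m != x /\ (m, x) \notin D)) => [[m [nmx hmx]]|hno].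
  exists (1 - Qs R D m); split; first exact: Qs_nz.
  apply: (@spanP_ext _ _ _ _ _ (fun t => jac R t (mkcol m m) +
     \sum_(w | (m, w) \in D) (2%:R * yv R m w) * jac R t (mkcol m w))).
    move=> t; rewrite jac_mk.
    under eq_bigr => w _ do rewrite jac_mk.
    by rewrite (V1 R m t hs ht).
  apply: spanP_add; first by apply: spanP_col; rewrite mk_inT nmx.
  apply: spanP_sum => w hw; apply: spanP_scale; apply: spanP_col.
  rewrite mk_inT nmx /=; apply/negP => /eqP ewx; subst w.
  by rewrite hw in hmx.
have hall : forall m, m != x -> (m, x) \in D.
  move=> m nmx; apply/negPn/negP => h; apply: hno; exists m; split => //.
have hst : forall p q, (p, q) \in D -> q = x.
  move=> p q hpq; case: (eqVneq q x) => // nqx; exfalso.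
  case: (eqVneq p x) => [epx|npx].
    subst p; have := sNA hs hpq; by rewrite (hall q nqx).
  exact: (ttfE ht (hall p npx) (hall q nqx) hpq).
exists (yv R k x ^+ 2 + yv R u x ^+ 2); split; first exact: sq_nz.
apply: (@spanP_ext _ _ _ _ _ (fun t => - (2%:R * yv R k x * yv R u x) * jac R t (mkcol u k)
    + yv R u x ^+ 2 * jac R t (mkcol k k) + yv R k x ^+ 2 * jac R t (mkcol u u))).
  by move=> t; rewrite !jac_mk (V2 R t hs hst hkx (hall u nux) nuk).
apply: spanP_add; [apply: spanP_add|]; apply: spanP_scale; apply: spanP_col;
  by rewrite mk_inT ?nux ?nkx.
Qed.

Lemma K_span (D : GS) x k u : simple_digraph D -> transitive_triangle_free D ->
  (k, x) \in D -> u != k -> u != x ->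
  inspan (fun c t => FracField.tofrac (jac R t c)) (Tx x)
         (fun t : param D => FracField.tofrac (jac R t (mkcol k x))).
Proof.
move=> hs ht hkx nuk nux.
have [c0 [c0nz hc0]] := es_avail hs ht hkx nuk nux.
have nkx := sNE hs hkx.
have c1nz : c0 * (2%:R * yv R k x) != 0 by rewrite mulf_neq0 // mulf_neq0 // ?two_nz ?yv_nz.
have hsp : spanP (jf D) (Tx x) (fun t => (c0 * (2%:R * yv R k x)) * jac R t (mkcol k x)).
  apply: (@spanP_ext _ _ _ _ _ (fun t => (1 - Qs R D k) * (c0 * es R t) - c0 * jac R t (mkcol k k)
     - \sum_(w | ((k, w) \in D) && (w != x)) (c0 * (2%:R * yv R k w)) * jac R t (mkcol k w))).
    move=> t; have hV := V1 R k t hs ht; rewrite (bigD1 x hkx) /= in hV.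
    rewrite !jac_mk; under eq_bigr => w _ do rewrite jac_mk.
    have hs2 : \sum_(w | ((k, w) \in D) && (w != x)) c0 * (2%:R * yv R k w) * Jf R t k w =
               c0 * \sum_(w | ((k, w) \in D) && (w != x)) 2%:R * yv R k w * Jf R t k w.
      by rewrite mulr_sumr; apply: eq_bigr => w _; rewrite !mulrA.
    rewrite hs2 mulrCA -hV; ring.
  apply: spanP_add; last first.
    apply: spanP_opp; apply: spanP_sum => w /andP [hw nwx]; apply: spanP_scale.
    by apply: spanP_col; rewrite mk_inT nkx nwx.
  apply: spanP_add; first by apply: spanP_scale.
  by apply: spanP_opp; apply: spanP_scale; apply: spanP_col; rewrite mk_inT nkx.
have [b hb] := hsp.
set c1 := c0 * (2%:R * yv R k x) in c1nz hb.
have c1Fnz : FracField.tofrac c1 != 0 by rewrite tofrac_eq0.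
exists (fun c => FracField.tofrac (b c) / FracField.tofrac c1) => t.
move: (hb t); move: (jac R t) => J hJ.
have h := congr1 (@FracField.tofrac _) hJ.
rewrite tofracM rmorph_sum /= in h.
apply: (mulfI c1Fnz); rewrite h mulr_sumr; apply: eq_bigr => c _.
by rewrite tofracM mulrA [FracField.tofrac c1 * _]mulrC divfK.
Qed.

Lemma rowP2 (D : GS) x k w (hxw : (x, w) \in D) : simple_digraph D -> k != x ->
  (w == k) || ((k, w) \in D) ->
  jac R (Some (exist _ (x, w) hxw)) (mkcol k x) != 0 /\
  (forall c, c \in Tx x -> jac R (Some (exist _ (x, w) hxw)) c = 0).
Proof.
move=> hs nkx hw; split.
  rewrite jac_mk /= eqxx (negbTE nkx) mul0r oppr0 sub0r mul1r.
  case/orP: hw => [/eqP ewk|hkw].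
    by subst w; rewrite Mx_self // mulrN1 oppr_eq0 xs_nz.
  by rewrite (Mx_off _ _ (sNE hs hkw)) (Lv_in _ hkw) opprK mulf_neq0 ?xs_nz ?yv_nz.
move=> c; rewrite inE => /andP [h1 h2]; rewrite jacE /= (negbTE h1) (negbTE h2).
by rewrite /=; ring.
Qed.

Lemma loop_zero (D : GS) x k : simple_digraph D -> k != x ->
  (k, x) \notin D -> (x, k) \notin D ->
  (forall w, (x, w) \in D -> (k, w) \in D -> False) ->
  forall t : param D, jac R t (mkcol k x) = 0.
Proof.
move=> hs nkx hkx hxk hcc; case=> [[[c d] hcd]|]; rewrite jac_mk /=.
  have e1 : (k == c)%:R * Mx R D x d = 0.
    case: (eqVneq k c) => [ekc|]; last by rewrite mul0r.
    subst c; have nxd : x != d.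
      by apply/negP => /eqP exd; subst d; rewrite hcd in hkx.
    rewrite (Mx_off _ _ nxd) Lv_out ?oppr0 ?mulr0 //.
    by apply/negP => hxd; apply: (hcc d hxd hcd).
  have e2 : (x == c)%:R * Mx R D k d = 0.
    case: (eqVneq x c) => [exc|]; last by rewrite mul0r.
    subst c; have nkd : k != d.
      by apply/negP => /eqP ekd; subst d; rewrite hcd in hxk.
    rewrite (Mx_off _ _ nkd) Lv_out ?oppr0 ?mulr0 //.
    by apply/negP => hkd; apply: (hcc d hcd hkd).
  by rewrite e1 e2; ring.
rewrite PP_expand (negbTE nkx) (Lv_out _ hxk) (Lv_out _ hkx) big1 ?subr0 ?addr0 //.
move=> l _; rewrite /Lv; case: ifP => h1; last by rewrite mul0r.
case: ifP => h2; last by rewrite mulr0.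
by exfalso; apply: (hcc l h2 h1).
Qed.

Lemma loop_D1 (D : GS) k x (h : (k, x) \in D) : simple_digraph D ->
  jac R (Some (exist _ (k, x) h)) (mkcol k x) != 0.
Proof.
move=> hs; have nkx := sNE hs h.
rewrite jac_mk /= eqxx (eq_sym x k) (negbTE nkx) Mx_self //.
by rewrite /= mul0r subr0 mulr1 mulrN1 oppr_eq0 xs_nz.
Qed.

Lemma core (D1 D2 : GS) k x u : simple_digraph D1 -> simple_digraph D2 ->
  transitive_triangle_free D1 -> (k, x) \in D1 -> (k, x) \notin D2 ->
  u != k -> u != x -> ~ same_jacobian_matroid R D1 D2.
Proof.
move=> hs1 hs2 ht1 hkx hkx2 nuk nux hsame.
have nkx := sNE hs1 hkx.
case: (classic (exists w, (x, w) \in D2 /\ ((w == k) || ((k, w) \in D2)))) => [[w [hxw hw]]|hno].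
  have [hK0 hT0] := rowP2 hxw hs2 nkx hw.
  apply: (@key_contra _ _ _ _ (fun c t => FracField.tofrac (jac R t c))
     (fun c t => FracField.tofrac (jac R t c)) (Tx x) (mkcol k x)).
  - by move=> S; apply: hsame.
  - by rewrite mk_inT eqxx andbF.
  - exact: K_span hs1 ht1 hkx nuk nux.
  - exists (Some (exist _ (x, w) hxw)); split; first by rewrite tofrac_eq0.
    by move=> c cT; rewrite hT0 // tofrac0.
have hxk : (x, k) \notin D2.
  by apply/negP => h; apply: hno; exists k; rewrite h eqxx.
have hcc : forall w, (x, w) \in D2 -> (k, w) \in D2 -> False.
  by move=> w h1 h2; apply: hno; exists w; rewrite h1 h2 orbT.
have hz := loop_zero hs2 nkx hkx2 hxk hcc.
have h1 : jac_indep R D1 [set mkcol k x].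
  move=> a ha c; rewrite inE => /eqP ->.
  have := ha (Some (exist _ (k, x) hkx)); rewrite big_set1 => /eqP.
  by rewrite mulf_eq0 tofrac_eq0 (negbTE (loop_D1 hkx hs1)) orbF => /eqP.
have h2 : ~ jac_indep R D2 [set mkcol k x].
  move=> h.
  have hsum : forall t : param D2,
      \sum_(c in [set mkcol k x]) (fun _ => 1) c * FracField.tofrac (jac R t c) = 0.
    by move=> t; rewrite big_set1 hz tofrac0 mulr0.
  by have /eqP := h (fun _ => 1) hsum (mkcol k x) (set11 _); rewrite oner_eq0.
exact: h2 ((hsame _).1 h1).
Qed.

Lemma third (D : GS) k x : (k, x) \in D -> ~ complete_digraph D ->
  exists u, u != k /\ u != x.
Proof.
move=> hkx hnc; apply: NNPP => hno; apply: hnc => i j nij.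
have hv : forall v, (v == k) || (v == x).
  move=> v; case: (eqVneq v k) => //= nvk; case: (eqVneq v x) => //= nvx.
  by exfalso; apply: hno; exists v.
rewrite /adjacent.
case/orP: (hv i) => /eqP ei; case/orP: (hv j) => /eqP ej; subst i j.
- by rewrite eqxx in nij.
- by rewrite hkx.
- by rewrite hkx orbT.
- by rewrite eqxx in nij.
Qed.

End Conc2.

Theorem theorem4p8 (R : realType) (n : nat) (D1 D2 : {set 'I_n * 'I_n}) :
  D1 != D2 ->
  simple_digraph D1 -> simple_digraph D2 ->
  ~ complete_digraph D1 -> ~ complete_digraph D2 ->
  transitive_triangle_free D1 -> transitive_triangle_free D2 ->
  ~ same_jacobian_matroid R D1 D2.
Proof.
move=> hne hs1 hs2 hnc1 hnc2 ht1 ht2 hsame.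
case: (pickP (fun e => (e \in D1) != (e \in D2))) => [[k x] /= he|hnone]; last first.
  have hD : D1 = D2 by apply/setP => e; move: (hnone e) => /= /negbFE/eqP.
  by rewrite hD eqxx in hne.
case: (boolP ((k, x) \in D1)) => h1.
  have h2 : (k, x) \notin D2 by move: he; rewrite h1; case: ((k, x) \in D2).
  have [u [nuk nux]] := third h1 hnc1.
  exact: (core hs1 hs2 ht1 h1 h2 nuk nux hsame).
have h2 : (k, x) \in D2 by move: he; rewrite (negbTE h1); case: ((k, x) \in D2).
have [u [nuk nux]] := third h2 hnc2.
apply: (core hs2 hs1 ht2 h2 h1 nuk nux) => S; split => h; by apply/(hsame S).
Qed.
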